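(* Let $V$ be a finite dimensional real or complex vector space with $\dim V=n$, let $B:V\to V$ be an invertible linear map, let $v_1,\dots,v_k\in V$ and $p_1,\dots,p_k\in V^*$, and let $$B'=B+\sum_{i=1}^{k}v_i\otimes p_i .$$ Put $u_i=B^{-1}v_i$ for $i=1,\dots,k$ and $A=\mathrm{id}_V+\sum_{i=1}^{k}u_i\otimes p_i$. If $\det A\neq 0$, then $B'$ is invertible and $$(B')^{-1}=\frac{1}{\det A}B^{-1}+\frac{1}{\det A}\left(\sum_{i=1}^{\min(n-1,k)}\ \sum_{1\le j_1<\dots<j_i\le k}(u_{j_1},p_{j_1})\,\square\,\cdots\,\square\,(u_{j_i},p_{j_i})\right)B^{-1}.$$
   Context: For $v\in V$ and $p\in V^*$, $v\otimes p$ denotes the linear map $V\to V$, $x\mapsto p(x)\,v$. For covectors $q_1,\dots,q_m\in V^*$ and vectors $w_1,\dots,w_m\in V$, $(q_1\wedge\dots\wedge q_m)(w_1,\dots,w_m)=\det\bigl[q_a(w_b)\bigr]_{a,b=1}^{m}$. For $\dim V=n\ge 2$, $1\le i\le n-1$, vectors $z_1,\dots,z_i\in V$ and covectors $p_1,\dots,p_i\in V^*$, the operator $(z_1,p_1)\,\square\,\cdots\,\square\,(z_i,p_i):V\to V$ is the unique linear map $T$ such that $q(Tv)=(q\wedge p_1\wedge\dots\wedge p_i)(v,z_1,\dots,z_i)$ for all $v\in V$, $q\in V^*$. Empty sums are zero. *)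

(* Defs.v *)
From HB Require Import structures.
From mathcomp Require Import all_boot all_order all_algebra.
From mathcomp Require Import reals complex.
Set Implicit Arguments. Unset Strict Implicit. Unset Printing Implicit Defensive.
Import GRing.Theory.
Local Open Scope ring_scope.

(* V = 'cV[F]_n (column vectors), V^* = 'rV[F]_n (row vectors, acting by *m),
   linear maps V -> V = 'M[F]_n acting by left multiplication.
   v (x) p : x |-> p(x) v  is the matrix  v *m p. *)
Definition tens (F : fieldType) (n : nat) (v : 'cV[F]_n) (p : 'rV[F]_n) : 'M[F]_n :=
  v *m p.

(* (q_1 /\ ... /\ q_m)(w_1,...,w_m) = det [q_a(w_b)]_{a,b}, with the families
   given as sequences of length m. *)
Definition wedge_eval (F : fieldType) (n m : nat)
    (qs : seq 'rV[F]_n) (ws : seq 'cV[F]_n) : F :=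
  \det (\matrix_(a < m, b < m) (nth 0 qs a *m nth 0 ws b) 0 0).

(* (z_1,p_1) [] ... [] (z_i,p_i), for s = [:: (z_1,p_1); ...; (z_i,p_i)]:
   the unique linear T with q(Tv) = (q /\ p_1 /\ ... /\ p_i)(v, z_1, ..., z_i).
   Its matrix entry (r,c) is e_r^*(T e_c). *)
Definition box (F : fieldType) (n : nat) (s : seq ('cV[F]_n * 'rV[F]_n)) : 'M[F]_n :=
  \matrix_(r < n, c < n)
    wedge_eval (size s).+1 (delta_mx 0 r :: map snd s) (delta_mx c 0 :: map fst s).

Definition SM_formula (F : fieldType) : Prop :=
  forall (n k : nat) (B : 'M[F]_n) (v : 'I_k -> 'cV[F]_n) (p : 'I_k -> 'rV[F]_n),
  B \in unitmx ->
  let B' := B + \sum_(i < k) tens (v i) (p i) in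
  let u := fun i => invmx B *m v i in
  let A := 1%:M + \sum_(i < k) tens (u i) (p i) in
  \det A != 0 ->
  B' \in unitmx /\
  invmx B' = (\det A)^-1 *: invmx B
    + (\det A)^-1 *:
      ((\sum_(1 <= i < (minn (n - 1) k).+1)
          \sum_(S : {set 'I_k} | #|S| == i)
            box [seq (u j, p j) | j <- enum S]) *m invmx B).

(* Main.v *)
Set Warnings "-notation-overridden -ambiguous-paths".
Require Import Defs.
From mathcomp Require Import all_boot all_order all_algebra.
From mathcomp Require Import reals complex.
Set Implicit Arguments. Unset Strict Implicit. Unset Printing Implicit Defensive.
Import GRing.Theory.
Local Open Scope ring_scope.

Section S.
Variables (F : fieldType) (n : nat).

Definition Dm N (L1 : seq 'rV[F]_n) (L2 : seq 'cV[F]_n) (m0 : nat) : F :=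
  \det (\matrix_(a < N, b < N)
     ((nth 0 L1 a *m nth 0 L2 b) 0 0 + ((a == b :> nat) && (m0 <= a)%N)%:R)).

Fixpoint Ls (s : seq ('cV[F]_n * 'rV[F]_n)) (xs : seq 'rV[F]_n) (ys : seq 'cV[F]_n) : F :=
  match s with
  | [::] => wedge_eval (size xs) xs ys
  | a :: s' => Ls s' xs ys + Ls s' (rcons xs a.2) (rcons ys a.1)
  end.

Lemma Dm_step N (L1 : seq 'rV[F]_n) (L2 : seq 'cV[F]_n) m (L1' : seq 'rV[F]_n) (L2' : seq 'cV[F]_n) :
  (m < N.+1)%N ->
  (forall a : 'I_N, nth 0 L1 (lift (inord m) a) = nth 0 L1' a) ->
  (forall a : 'I_N, nth 0 L2 (lift (inord m) a) = nth 0 L2' a) ->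
  Dm N.+1 L1 L2 m = Dm N L1' L2' m + Dm N.+1 L1 L2 m.+1.
Proof.
move=> ltm H1 H2.
set i0 : 'I_N.+1 := inord m.
have i0E : i0 = m :> nat by rewrite /i0 inordK.
rewrite /Dm.
set M1 := \matrix_(a < N.+1, b < N.+1) ((L1`_a *m L2`_b) 0 0 + ((a == b :> nat) && (m <= a)%N)%:R).
set M2 := \matrix_(a < N.+1, b < N.+1) ((L1`_a *m L2`_b) 0 0 + ((a == b :> nat) && (m.+1 <= a)%N)%:R).
rewrite (expand_det_row M1 i0) (expand_det_row M2 i0).
have cofE j : cofactor M1 i0 j = cofactor M2 i0 j.
  rewrite /cofactor; congr (_ * \det _); apply/matrixP => a b; rewrite !mxE.
  congr (_ + (_ && _)%:R).
  have := neq_lift i0 a; rewrite -(inj_eq val_inj) /= i0E => ne.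
  by rewrite ltn_neqAle ne.
rewrite (eq_bigr (fun j => M2 i0 j * cofactor M2 i0 j + (j == i0)%:R * cofactor M2 i0 j)); last first.
  move=> j _; rewrite cofE -mulrDl !mxE; congr (_ * _).
  rewrite i0E leqnn andbT ltnn andbF addr0; congr (_ + (nat_of_bool _)%:R).
  by apply/idP/idP => /eqP h; apply/eqP; [apply: val_inj; rewrite /= i0E | rewrite h i0E].
rewrite big_split /= addrC; congr (_ + _).
rewrite (bigD1 i0) //= big1 ?addr0; last by move=> j /negPf ->; rewrite mul0r.
rewrite eqxx mul1r /cofactor addnn -signr_odd odd_double expr0 mul1r.
congr (\det _); apply/matrixP => a b; rewrite !mxE H1 H2; congr (_ + (_ && _)%:R).
  by rewrite (inj_eq val_inj) (inj_eq (@lift_inj _ i0)).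
rewrite /= /bump i0E; case: (leqP m a) => h; first by rewrite add1n ltnS h.
by rewrite add0n; apply/negbTE; rewrite -leqNgt; apply: ltnW.
Qed.


Lemma nth_bump (T : Type) (x0 : T) (xs ys : seq T) p i :
  nth x0 (xs ++ p :: ys) (bump (size xs) i) = nth x0 (xs ++ ys) i.
Proof.
rewrite !nth_cat /bump; case: (leqP (size xs) i) => h.
  by rewrite add1n ltnNge (leq_trans h (leqnSn i)) /= subSn.
by rewrite add0n h.
Qed.

Lemma Ls_Dm (s : seq ('cV[F]_n * 'rV[F]_n)) : forall xs ys, size xs = size ys ->
  Ls s xs ys = Dm (size s + size xs) (xs ++ map snd s) (ys ++ map fst s) (size xs).
Proof.
elim: s => [|a s IH] xs ys hs /=.
  rewrite !cats0 /Dm; congr (\det _); apply/matrixP => i j; rewrite !mxE.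
  by rewrite leqNgt ltn_ord andbF addr0.
rewrite (@Dm_step _ _ _ _ (xs ++ map snd s) (ys ++ map fst s)).
- rewrite -IH //; congr (_ + _).
  rewrite IH ?size_rcons ?hs // addnS !cat_rcons //.
- by rewrite ltnS leq_addl.
- by move=> i; rewrite /= inordK ?ltnS ?leq_addl // nth_bump.
- by move=> i; rewrite /= inordK ?ltnS ?leq_addl //; have := nth_bump 0 ys (map fst s) a.1 i; rewrite -hs.
Qed.


Definition W (qs : seq 'rV[F]_n) (ws : seq 'cV[F]_n) := wedge_eval (size qs) qs ws.

Lemma Ls_sets (T : finType) (f : T -> 'cV[F]_n * 'rV[F]_n) (r : seq T) :
  uniq r -> forall xs ys,
  Ls (map f r) xs ys = \sum_(S : {set T} | S \subset [set x in r])
     W (xs ++ map snd (map f [seq x <- r | x \in S]))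
       (ys ++ map fst (map f [seq x <- r | x \in S])).
Proof.
elim: r => [|x r IH] /=.
  move=> _ xs ys.
  have -> : [set x in [::] : seq T] = set0 by apply/setP => y; rewrite !inE.
  rewrite (eq_bigl (fun S => S == set0)); last by move=> S; rewrite subset0.
  by rewrite big_pred1_eq /= !cats0.
case/andP => xr ur xs ys.
rewrite !IH //.
have -> : [set y in x :: r] = x |: [set y in r] by apply/setP => y; rewrite !inE.
rewrite [RHS](bigID (fun S : {set T} => x \in S)) /= addrC; congr (_ + _).
  apply: eq_big => S.
    apply/idP/idP.
      move=> sub; have xS : x \notin S.
        by apply/negP => /(subsetP sub); rewrite inE (negPf xr).
      by rewrite xS andbT (subset_trans sub) // subsetUr.
    case/andP => sub xS; apply/subsetP => y yS.
    have := subsetP sub y yS; rewrite !inE; case/orP => // /eqP yx.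
    by move: xS; rewrite -yx yS.
  move=> sub; have xS : x \notin S.
    by apply/negP => /(subsetP sub); rewrite inE (negPf xr).
  by rewrite (negPf xS).
rewrite [RHS](reindex_onto (fun S => x |: S) (fun S => S :\ x)) /=; last first.
  by move=> S /andP [_ xS]; rewrite setD1K.
symmetry; apply: eq_big => S.
  apply/idP/idP.
    case/andP => /andP [sub _] /eqP e; apply/subsetP => y yS.
    have := subsetP sub y; rewrite !inE yS orbT => /(_ isT); case/orP => // /eqP yx.
    have : y \in (x |: S) :\ x by rewrite e.
    by rewrite !inE yx eqxx.
  move=> sub; have xS : x \notin S.
    by apply/negP => /(subsetP sub); rewrite inE (negPf xr).
  rewrite setU11 setUS //=; apply/eqP/setP => y; rewrite !inE.
  by case: eqP => // ->; rewrite (negPf xS).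
move=> _; rewrite setU11 /= -!cat_rcons.
have -> : [seq y <- r | y \in x |: S] = [seq y <- r | y \in S].
  apply: eq_in_filter => y yr; rewrite !inE; case: eqP => // yx.
  by move: xr; rewrite -yx yr.
by [].
Qed.


Lemma cof0_eq m (A1 A2 : 'M[F]_m.+1) b :
  (forall i j, i != 0 -> A1 i j = A2 i j) -> cofactor A1 0 b = cofactor A2 0 b.
Proof.
move=> H; rewrite /cofactor; congr (_ * \det _); apply/matrixP => i j; rewrite !mxE.
by apply: H; rewrite eq_sym neq_lift.
Qed.

End S.

Section C.
Variables (F : fieldType) (n k : nat) (u : 'I_k -> 'cV[F]_n) (p : 'I_k -> 'rV[F]_n).

Definition PP := [seq p j | j <- enum 'I_k].
Definition UU := [seq u j | j <- enum 'I_k].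
Definition NN (l c : 'I_n) : 'M[F]_k.+1 := \matrix_(a < k.+1, b < k.+1)
     ((nth 0 (delta_mx 0 l :: PP) a *m nth 0 (delta_mx c 0 :: UU) b) 0 0 + ((a == b :> nat) && (1 <= a)%N)%:R).
Definition GG : 'M[F]_k := \matrix_(i, j) (p i *m u j) 0 0.

Lemma PPE (i : 'I_k) : nth 0 PP i = p i.
Proof. by rewrite /PP (nth_map i) ?size_enum_ord // nth_ord_enum. Qed.
Lemma UUE (i : 'I_k) : nth 0 UU i = u i.
Proof. by rewrite /UU (nth_map i) ?size_enum_ord // nth_ord_enum. Qed.

Lemma NN00 l c : NN l c 0 0 = (l == c)%:R.
Proof. by rewrite mxE /= mul_delta_mx_cond addr0; case: eqP => _; rewrite ?mulr0n ?mulr1n ?mxE // !eqxx. Qed.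

Lemma NN0l l c (j : 'I_k) : NN l c 0 (lift 0 j) = u j l 0.
Proof. by rewrite mxE lift0 /= UUE -rowE mxE addr0. Qed.

Lemma NNl0 l c (i : 'I_k) : NN l c (lift 0 i) 0 = p i 0 c.
Proof. by rewrite mxE lift0 /= PPE -colE mxE addr0. Qed.

Lemma NNll l c (i j : 'I_k) : NN l c (lift 0 i) (lift 0 j) = (p i *m u j) 0 0 + (i == j)%:R.
Proof. by rewrite mxE !lift0 /= PPE UUE andbT. Qed.


Lemma ucol (i : 'I_k) (M : 'M[F]_1) (r : 'I_n) : (u i *m M) r 0 = u i r 0 * M 0 0.
Proof. by rewrite mxE big_ord1. Qed.

Lemma adjX : let A := 1%:M + \sum_(i < k) tens (u i) (p i) in
  A *m (\matrix_(r, c) \det (NN r c)) = \det (1%:M + GG) *: 1%:M.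
Proof.
move=> A; apply/matrixP => r c; rewrite !mxE.
set C := fun b => cofactor (NN r c) 0 b.
transitivity (\sum_l A r l * \sum_b NN l c 0 b * C b).
  apply: eq_bigr => l _; congr (_ * _); rewrite mxE (expand_det_row _ 0).
  apply: eq_bigr => b _; congr (_ * _); apply: cof0_eq => i j i0.
  case: (unliftP 0 i) i0 => [i' ->|->]; last by rewrite eqxx.
  by rewrite !mxE lift0.
have w b : \sum_l A r l * NN l c 0 b =
    (r == c)%:R * (b == 0)%:R + \sum_i u i r 0 * NN r c (lift 0 i) b.
  case: (unliftP 0 b) => [j ->| ->].
    rewrite (eq_bigr (fun l => A r l * u j l 0)); last by move=> l _; rewrite NN0l.
    transitivity ((A *m u j) r 0); first by rewrite mxE.
    rewrite (eq_sym (lift 0 j)) (negPf (neq_lift 0 j)) mulr0 add0r.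
    rewrite /A mulmxDl mul1mx mulmx_suml mxE summxE.
    rewrite (eq_bigr (fun i => u i r 0 * (p i *m u j) 0 0)); last first.
      by move=> i _; rewrite /tens -mulmxA ucol.
    rewrite [RHS](eq_bigr (fun i => u i r 0 * (p i *m u j) 0 0 + u i r 0 * (i == j)%:R)); last first.
      by move=> i _; rewrite NNll mulrDr.
    rewrite big_split /= addrC; congr (_ + _).
    rewrite (bigD1 j) //= eqxx mulr1 big1 ?addr0 // => i /negPf ->; by rewrite mulr0.
  rewrite (eq_bigr (fun l => A r l * 1%:M l c)); last by move=> l _; rewrite NN00 [1%:M l c]mxE.
  transitivity ((A *m 1%:M) r c); first by rewrite mxE.
  rewrite mulmx1 eqxx mulr1 /A mxE summxE; congr (_ + _); first by rewrite mxE.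
  by apply: eq_bigr => i _; rewrite NNl0 /tens mxE big_ord1.
rewrite (eq_bigr (fun l => \sum_b A r l * (NN l c 0 b * C b))); last first.
  by move=> l _; rewrite big_distrr.
rewrite exchange_big /=.
rewrite (eq_bigr (fun b => (\sum_l A r l * NN l c 0 b) * C b)); last first.
  by move=> b _; rewrite big_distrl; apply: eq_bigr => l _; rewrite mulrA.
under eq_bigr => b _ do rewrite w mulrDl.
rewrite big_split /=.
rewrite (bigD1 0) //= mulr1 big1 ?addr0; last first.
  by move=> b /negPf ->; rewrite mulr0n mulr0 mul0r.
rewrite (eq_bigr (fun b => \sum_i u i r 0 * (NN r c (lift 0 i) b * C b))); last first.
  by move=> b _; rewrite big_distrl; apply: eq_bigr => i _; rewrite mulrA.
rewrite exchange_big big1 /= ?addr0; last first.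
  move=> i _.
  rewrite -big_distrr /=; apply/eqP; rewrite mulf_eq0; apply/orP; right; apply/eqP.
  have := congr1 (fun M : 'M[F]_k.+1 => M (lift 0 i) 0) (mul_mx_adj (NN r c)).
  rewrite [LHS]mxE [RHS]mxE eq_sym (negPf (neq_lift 0 i)) mulr0n => e.
  rewrite -[RHS]e; apply: eq_bigr => b _; rewrite /C [\adj _ _ _]mxE //.
rewrite mulrC; congr (_ * _).
rewrite /C /cofactor /= expr0 mul1r; congr (\det _).
apply/matrixP => i j; rewrite [LHS]mxE [LHS]mxE NNll !mxE addrC.
by [].
Qed.

End C.

Lemma sylvester (F : fieldType) m k (U : 'M[F]_(m, k)) (P : 'M[F]_(k, m)) :
  \det (1%:M + P *m U) = \det (1%:M + U *m P).
Proof.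
have e1 : block_mx (1%:M : 'M_m) (- U) P (1%:M : 'M_k) =
   block_mx 1%:M 0 P 1%:M *m block_mx 1%:M (- U) 0 (1%:M + P *m U).
  rewrite mulmx_block ?mul1mx ?mulmx1 ?mul0mx ?mulmx0 ?addr0 ?add0r.
  by rewrite mulmxN addrCA addNr addr0.
have e2 : block_mx (1%:M : 'M_m) (- U) P (1%:M : 'M_k) =
   block_mx (1%:M + U *m P) (- U) 0 1%:M *m block_mx 1%:M 0 P 1%:M.
  rewrite mulmx_block ?mul1mx ?mulmx1 ?mul0mx ?mulmx0 ?addr0 ?add0r mulNmx.
  by rewrite addrK.
have := congr1 determinant e1; rewrite e2 !det_mulmx (det_ublock (1%:M + U *m P)) (det_ublock 1%:M (- U)).
by rewrite (det_lblock 1%:M) !det1 !mul1r !mulr1 => ->.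
Qed.

Lemma wedge0 (F : fieldType) n m (qs : seq 'rV[F]_n) (ws : seq 'cV[F]_n) :
  (n < m)%N -> wedge_eval m qs ws = 0.
Proof.
move=> nm.
pose Q : 'M[F]_(m, n) := \matrix_(a, t) (nth 0 qs a) 0 t.
pose Wm : 'M[F]_(n, m) := \matrix_(t, b) (nth 0 ws b) t 0.
have e : wedge_eval m qs ws = \det (Q *m Wm).
  rewrite /wedge_eval; congr (\det _); apply/matrixP => a b; rewrite !mxE.
  by apply: eq_bigr => t _; rewrite !mxE.
case: (eqVneq (wedge_eval m qs ws) 0) => // h; exfalso.
have : Q *m Wm \in unitmx by rewrite unitmxE unitfE -e.
rewrite -row_free_unit /row_free => /eqP r.
have := leq_trans (mxrankM_maxl Q Wm) (rank_leq_col Q).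
by rewrite r leqNgt nm.
Qed.

Lemma enum_setE (T : finType) (S : {set T}) : enum S = [seq x <- enum T | x \in S].
Proof. by rewrite enumT. Qed.

Lemma Xsum (F : fieldType) n k (u : 'I_k -> 'cV[F]_n) (p : 'I_k -> 'rV[F]_n) :
  (\matrix_(r, c) \det (NN u p r c)) =
  \sum_(S : {set 'I_k}) box [seq (u j, p j) | j <- enum S].
Proof.
apply/matrixP => r c; rewrite summxE mxE.
pose f := fun j : 'I_k => (u j, p j).
transitivity (Ls (map f (enum 'I_k)) [:: delta_mx 0 r] [:: delta_mx c 0]).
  rewrite Ls_Dm // size_map size_enum_ord addn1 !cat1s.
  have -> : map snd (map f (enum 'I_k)) = PP p by rewrite /PP -map_comp.
  have -> : map fst (map f (enum 'I_k)) = UU u by rewrite /UU -map_comp.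
  by [].
rewrite (@Ls_sets F n _ f (enum 'I_k)) ?enum_uniq //.
have -> : [set x in enum 'I_k] = setT by apply/setP => x; rewrite !inE mem_enum.
apply: eq_big => [S|S _]; first by rewrite subsetT.
by rewrite mxE /W /= !size_map enum_setE.
Qed.

From mathcomp Require Import zify.

Lemma part_card (V : zmodType) k N (G : {set 'I_k} -> V) :
  (forall S : {set 'I_k}, (N < #|S|)%N -> G S = 0) ->
  \sum_(S : {set 'I_k}) G S =
  \sum_(S : {set 'I_k} | #|S| == 0%N) G S
  + \sum_(1 <= i < (minn N k).+1) \sum_(S : {set 'I_k} | #|S| == i) G S.
Proof.
move=> hG.
have cardk (S : {set 'I_k}) : (#|S| < k.+1)%N by rewrite ltnS; apply: (leq_trans (max_card _)); rewrite card_ord.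
rewrite (partition_big (fun S : {set 'I_k} => Ordinal (cardk S)) xpredT) //=.
rewrite (eq_bigr (fun j : 'I_k.+1 => \sum_(S : {set 'I_k} | #|S| == j) G S)); last first.
  by move=> j _; apply: eq_bigl => S.
rewrite -(big_mkord xpredT (fun j => \sum_(S : {set 'I_k} | #|S| == j) G S)).
rewrite big_ltn // (big_cat_nat _ (n := (minn N k).+1)) //=; last by rewrite ltnS geq_minr.
rewrite [X in _ + (_ + X)]big_nat_cond [X in _ + (_ + X)]big1 ?addr0 //.
move=> j /andP [/andP [h1 h2] _]; apply: big1 => S /eqP hS; apply: hG.
rewrite hS; lia.
Qed.

Lemma box0 (F : fieldType) n : box ([::] : seq ('cV[F]_n * 'rV[F]_n)) = 1%:M.
Proof.
apply/matrixP => r c; rewrite !mxE /wedge_eval /= det_mx11 mxE /= mul_delta_mx_cond.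
by case: eqP => _; rewrite ?mulr0n ?mulr1n ?mxE // !eqxx.
Qed.

Lemma SM (F : fieldType) : SM_formula F.
Proof.
move=> n k B v p Bu B' u A dA.
pose Um : 'M[F]_(n, k) := \matrix_(r, i) u i r 0.
pose Pm : 'M[F]_(k, n) := \matrix_(i, c) p i 0 c.
have eA : \sum_(i < k) tens (u i) (p i) = Um *m Pm.
  apply/matrixP => r c; rewrite summxE !mxE; apply: eq_bigr => i _.
  by rewrite /tens mxE big_ord1 !mxE.
have eG : GG u p = Pm *m Um.
  by apply/matrixP => i j; rewrite !mxE; apply: eq_bigr => t _; rewrite !mxE.
pose X := \matrix_(r, c) \det (NN u p r c).
have hX : A *m X = \det A *: 1%:M.
  by rewrite /X adjX eG sylvester -eA.
have XS : X = 1%:M + \sum_(1 <= i < (minn (n - 1) k).+1)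
          \sum_(S : {set 'I_k} | #|S| == i) box [seq (u j, p j) | j <- enum S].
  rewrite /X Xsum (part_card (N := (n - 1)%N)).
    congr (_ + _); rewrite (eq_bigl (fun S => S == set0)); last by move=> S; rewrite cards_eq0.
    by rewrite big_pred1_eq enum_set0 box0.
  move=> S hS; apply/matrixP => r c; rewrite !mxE wedge0 //= size_map.
  rewrite -cardE ltnS; move: hS; case: (n) => [//|m]; rewrite subSS subn0 //.
have BA : B' = B *m A.
  rewrite /B' /A mulmxDr mulmx1 mulmx_sumr; congr (_ + _); apply: eq_bigr => i _.
  by rewrite /tens /u mulmxA mulmxA mulmxV // mul1mx.
set d := \det A.
have BY : B' *m (d^-1 *: (X *m invmx B)) = 1%:M.
  rewrite BA -mulmxA -scalemxAr mulmxA hX scalemx1 mul_scalar_mx scalerA mulVf //.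
  by rewrite scale1r mulmxV.
have [uB' _] := mulmx1_unit BY.
split => //.
rewrite -[invmx B'](mulmx1) -BY mulmxA mulVmx // mul1mx.
by rewrite XS mulmxDl mul1mx scalerDr.
Qed.

Theorem mainTheorem2 (R : realType) : SM_formula R /\ SM_formula (complex R).
Proof. by split; apply: SM. Qed.
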